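(* Fix a positive integer $N$. For every $\epsilon>0$ there exists $K_\epsilon>0$ such that for every Riemann integrable $\varphi:\mathbb T\to\mathbb C$, $$\limsup_{\substack{q\to\infty\\ d(q)\le N}}\frac{1}{\phi(q)}\Big|\big\{p\in\mathbb Z_q^\times: q^{-1/2}|g_\varphi(p,q)|>K_\epsilon\big\}\Big|\le\epsilon\,\|\varphi\|_2^2 .$$
   Context: $\mathbb T=\mathbb R/\mathbb Z$; $\|\varphi\|_2$ is the $L^2(\mathbb T)$ norm. $d(q)$ is the number of positive divisors of $q$. $\mathbb Z_q^\times=\{p\in\{1,\dots,q\}:\gcd(p,q)=1\}$, $\phi(q)=|\mathbb Z_q^\times|$. $e_q(x)=e^{2\pi i x/q}$ and $g_\varphi(p,q)=\sum_{h=0}^{q-1}\varphi(h/q)\,e_q(ph^2)$. *)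

(* Defs.v *)
From Stdlib Require Import Reals List Arith.
From Coquelicot Require Import Coquelicot.
Import ListNotations.
Open Scope R_scope.

Definition ndiv (q : nat) : nat :=
  length (filter (fun d => Nat.eqb (q mod d) 0) (seq 1 q)).

Definition units_list (q : nat) : list nat :=
  filter (fun p => Nat.eqb (Nat.gcd p q) 1) (seq 1 q).

Definition eulerphi (q : nat) : nat := length (units_list q).

Definition eq_ (q : nat) (x : R) : C :=
  (cos (2 * PI * x / INR q), sin (2 * PI * x / INR q)).

Fixpoint Csum (n : nat) (f : nat -> C) : C :=
  match n with
  | O => 0%C
  | S m => Cplus (Csum m f) (f m)
  end.

(* g_phi(p,q) = sum_{h=0}^{q-1} phi(h/q) e_q(p h^2) *)
Definition gauss (phi : R -> C) (p q : nat) : C :=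
  Csum q (fun h => Cmult (phi (INR h / INR q)) (eq_ q (INR (p * h * h)))).

(* ||phi||_2^2 on T = R/Z, identified with [0,1] *)
Definition L2sq (phi : R -> C) : R := RInt (fun x => (Cmod (phi x)) ^ 2) 0 1.

Definition large_count (phi : R -> C) (K : R) (q : nat) : nat :=
  length (filter (fun p => if Rlt_dec K (Cmod (gauss phi p q) / sqrt (INR q))
                           then true else false) (units_list q)).

(* functions on T = R/Z: 1-periodic functions R -> C *)
Definition periodic1 (phi : R -> C) : Prop := forall x, phi (x + 1) = phi x.

(* Main.v *)
Require Import Defs.
From Stdlib Require Import Reals Lra List RList Lia ZArith Znumtheory Bool Arith.
From Coquelicot Require Import Coquelicot.
From mathcomp Require all_boot.
Open Scope R_scope.
Open Scope R_scope.

Lemma StepFun_comp (a b : R) (h : R -> R) (f : StepFun a b) :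
  IsStepFun (fun x => h (f x)) a b.
Proof.
  unfold IsStepFun; exists (subdivision f); unfold is_subdivision.
  exists (map h (subdivision_val f)).
  generalize (StepFun_P1 f); unfold adapted_couple; intros H; decompose [and] H; clear H.
  repeat split; try assumption.
  - rewrite H3. rewrite RList_P18; reflexivity.
  - intros i Hi x Hx. unfold constant_D_eq, open_interval in H5.
    rewrite (H5 _ Hi _ Hx). rewrite RList_P12; [reflexivity|].
    rewrite H3 in Hi; simpl in Hi; exact Hi.
Qed.

Definition clampM (M y : R) := Rmax (-M) (Rmin M y).

Lemma sq_integrable (f : R -> R) (a b M : R) :
  0 < M -> (forall t, Rmin a b <= t <= Rmax a b -> Rabs (f t) <= M) ->
  Riemann_integrable f a b -> Riemann_integrable (fun x => f x * f x) a b.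
Proof.
  intros HM Hb Hf eps.
  assert (He : 0 < eps / (2 * M)) by (apply Rdiv_lt_0_compat; [apply cond_pos|lra]).
  destruct (Hf (mkposreal _ He)) as [phi [psi [H1 H2]]].
  exists (mkStepFun (StepFun_comp a b (fun y => clampM M y * clampM M y) phi)).
  exists (mkStepFun (StepFun_P28 (2 * M) (mkStepFun (StepFun_P4 a b 0)) psi)).
  split.
  - intros t Ht. simpl. unfold fct_cte.
    specialize (H1 t Ht). specialize (Hb t Ht).
    set (c := clampM M (phi t)).
    assert (Hc1 : Rabs (f t - c) <= Rabs (f t - phi t)).
    { unfold c, clampM. apply Rabs_le_between in Hb.
      unfold Rmax, Rmin; repeat destruct Rle_dec; unfold Rabs; repeat destruct Rcase_abs; lra. }
    assert (Hc2 : Rabs (f t + c) <= 2 * M).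
    { unfold c, clampM. apply Rabs_le_between in Hb.
      unfold Rmax, Rmin; repeat destruct Rle_dec; unfold Rabs; repeat destruct Rcase_abs; lra. }
    replace (f t * f t - c * c) with ((f t - c) * (f t + c)) by ring.
    rewrite Rabs_mult.
    assert (0 <= Rabs (f t - c)) by apply Rabs_pos.
    assert (0 <= Rabs (f t + c)) by apply Rabs_pos.
    assert (Rabs (f t - c) <= psi t) by lra.
    apply Rle_trans with (psi t * (2 * M)); [|lra].
    apply Rmult_le_compat; lra.
  - rewrite StepFun_P30. rewrite StepFun_P18.
    replace (0 * (b - a) + 2 * M * RiemannInt_SF psi) with (2 * M * RiemannInt_SF psi) by ring.
    rewrite Rabs_mult. rewrite (Rabs_right (2*M)) by lra.
    simpl in H2.
    apply Rlt_le_trans with (2 * M * (eps / (2 * M))).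
    + apply Rmult_lt_compat_l; lra.
    + right; field; lra.
Qed.

Open Scope R_scope.

Fixpoint RS (n : nat) (f : nat -> R) : R :=
  match n with O => 0 | S k => RS k f + f k end.
Lemma RS_ext n f g : (forall i, (i < n)%nat -> f i = g i) -> RS n f = RS n g.
Proof. induction n; intros H; simpl; auto. rewrite IHn by (intros; apply H; lia). rewrite H by lia. auto. Qed.
Lemma RS_scal n f c : RS n (fun i => c * f i) = c * RS n f.
Proof. induction n; simpl; [ring|rewrite IHn; ring]. Qed.
Lemma RS_front n f : RS (S n) f = f O + RS n (fun i => f (S i)).
Proof. induction n; simpl in *; [ring|]. rewrite IHn. ring. Qed.

Lemma RS_le n f g : (forall i, (i < n)%nat -> f i <= g i) -> RS n f <= RS n g.
Proof. induction n; intros H; simpl; [lra|]. apply Rplus_le_compat; [apply IHn; intros; apply H; lia| apply H; lia]. Qed.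
Lemma Csum_ext n f g : (forall i, (i < n)%nat -> f i = g i) -> Csum n f = Csum n g.
Proof. induction n; intros H; simpl; auto. rewrite IHn by (intros; apply H; lia). rewrite H by lia. auto. Qed.

Lemma Csum_RS n f : RtoC (RS n f) = Csum n (fun i => RtoC (f i)).
Proof. induction n; simpl; [reflexivity|]. rewrite <- IHn. apply injective_projections; simpl; ring. Qed.
Lemma Csum_plus n f g : Csum n (fun i => Cplus (f i) (g i)) = Cplus (Csum n f) (Csum n g).
Proof. induction n; simpl. apply injective_projections; simpl; ring. rewrite IHn. ring. Qed.
Lemma Csum_scal n f c : Csum n (fun i => Cmult c (f i)) = Cmult c (Csum n f).
Proof. induction n; simpl. apply injective_projections; simpl; ring. rewrite IHn. ring. Qed.
Lemma Csum_scal_r n f c : Csum n (fun i => Cmult (f i) c) = Cmult (Csum n f) c.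
Proof. induction n; simpl. apply injective_projections; simpl; ring. rewrite IHn. ring. Qed.
Lemma Csum_conj n f : Cconj (Csum n f) = Csum n (fun i => Cconj (f i)).
Proof. induction n; simpl. apply injective_projections; simpl; ring. rewrite Cplus_conj, IHn. reflexivity. Qed.
Lemma Csum_mult n m f g : Cmult (Csum n f) (Csum m g) = Csum n (fun i => Csum m (fun j => Cmult (f i) (g j))).
Proof.
  rewrite <- Csum_scal_r. apply Csum_ext. intros i _. rewrite <- Csum_scal. reflexivity.
Qed.
Lemma Csum_swap n m F : Csum n (fun i => Csum m (fun j => F i j)) = Csum m (fun j => Csum n (fun i => F i j)).
Proof.
  induction n; simpl.
  - induction m; simpl; auto. rewrite <- IHm. apply injective_projections; simpl; ring.
  - rewrite IHn. rewrite <- Csum_plus. reflexivity.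
Qed.
Lemma Cmod_Csum n f : Cmod (Csum n f) <= RS n (fun i => Cmod (f i)).
Proof.
  induction n; simpl. rewrite Cmod_0; lra.
  eapply Rle_trans; [apply Cmod_triangle|]. lra.
Qed.
Lemma cos_Zper x m : cos (x + 2 * IZR m * PI) = cos x.
Proof.
  destruct (Z_le_gt_dec 0 m) as [H|H].
  - rewrite <- (Z2Nat.id m) by lia. rewrite <- INR_IZR_INZ. apply cos_period.
  - replace x with ((x + 2 * IZR m * PI) + 2 * INR (Z.to_nat (- m)) * PI) at 2.
    + rewrite cos_period; auto.
    + rewrite INR_IZR_INZ, Z2Nat.id by lia. rewrite opp_IZR. ring.
Qed.

Lemma sin_Zper x m : sin (x + 2 * IZR m * PI) = sin x.
Proof.
  destruct (Z_le_gt_dec 0 m) as [H|H].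
  - rewrite <- (Z2Nat.id m) by lia. rewrite <- INR_IZR_INZ. apply sin_period.
  - replace x with ((x + 2 * IZR m * PI) + 2 * INR (Z.to_nat (- m)) * PI) at 2.
    + rewrite sin_period; auto.
    + rewrite INR_IZR_INZ, Z2Nat.id by lia. rewrite opp_IZR. ring.
Qed.

Lemma cos_eq_1_Z x : cos x = 1 -> exists m : Z, x = 2 * IZR m * PI.
Proof.
  intros H. assert (Hs : sin x = 0).
  { assert (E := sin2_cos2 x). rewrite H in E. unfold Rsqr in E. nra. }
  destruct (sin_eq_0_0 x Hs) as [k Hk].
  destruct (Zeven_odd_dec k) as [He|Ho].
  - destruct (Zeven_ex k He) as [m Hm]. exists m. rewrite Hk, Hm, mult_IZR. ring.
  - exfalso. destruct (Zodd_ex k Ho) as [m Hm].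
    rewrite Hk, Hm, plus_IZR, mult_IZR in H.
    replace ((2 * IZR m + 1) * PI) with (PI + 2 * IZR m * PI) in H by ring.
    rewrite cos_Zper, cos_PI in H. lra.
Qed.

Lemma eq_mult q x y : Cmult (eq_ q x) (eq_ q y) = eq_ q (x + y).
Proof.
  unfold eq_, Cmult; simpl.
  replace (2 * PI * (x + y) / INR q) with (2 * PI * x / INR q + 2 * PI * y / INR q)
    by (unfold Rdiv; ring).
  rewrite cos_plus, sin_plus. f_equal; ring.
Qed.

Lemma eq_conj q x : Cconj (eq_ q x) = eq_ q (- x).
Proof.
  unfold eq_, Cconj; simpl.
  replace (2 * PI * - x / INR q) with (- (2 * PI * x / INR q)) by (unfold Rdiv; ring).
  rewrite cos_neg, sin_neg. reflexivity.
Qed.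

Lemma eq_zero q : eq_ q 0 = RtoC 1.
Proof. unfold eq_. replace (2 * PI * 0 / INR q) with 0 by (unfold Rdiv; ring).
  rewrite cos_0, sin_0. reflexivity. Qed.

Lemma eq_intmul q m : (0 < q)%nat -> eq_ q (INR q * IZR m) = RtoC 1.
Proof.
  intros Hq. unfold eq_.
  assert (INR q <> 0) by (apply not_0_INR; lia).
  replace (2 * PI * (INR q * IZR m) / INR q) with (0 + 2 * IZR m * PI) by (field; auto).
  rewrite cos_Zper, sin_Zper, cos_0, sin_0. reflexivity.
Qed.

Lemma eq_pow q t p : eq_ q (INR p * t) = Cpow (eq_ q t) p.
Proof.
  induction p.
  - simpl. rewrite Rmult_0_l. apply eq_zero.
  - rewrite S_INR. simpl Cpow. rewrite <- IHp. rewrite eq_mult.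
    f_equal. ring.
Qed.



Lemma geom_sum (z : C) n : Cmult (Cminus (RtoC 1) z) (Csum n (fun p => Cpow z p)) = Cminus (RtoC 1) (Cpow z n).
Proof.
  induction n; simpl.
  - apply injective_projections; simpl; ring.
  - rewrite Cmult_plus_distr_l, IHn. ring.
Qed.

Lemma Csum_const_1 n : Csum n (fun _ => RtoC 1) = RtoC (INR n).
Proof. induction n; [reflexivity|]. simpl Csum. rewrite IHn, S_INR. apply injective_projections; simpl; ring. Qed.

Lemma char_sum q (k : Z) : (0 < q)%nat ->
  Csum q (fun p => Cpow (eq_ q (IZR k)) p) =
  if Z.eqb (Z.modulo k (Z.of_nat q)) 0 then RtoC (INR q) else RtoC 0.
Proof.
  intros Hq. assert (HqR : INR q <> 0) by (apply not_0_INR; lia).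
  destruct (Z.eqb_spec (Z.modulo k (Z.of_nat q)) 0) as [H|H].
  - apply Z.mod_divide in H; [|lia]. destruct H as [m Hm].
    replace (IZR k) with (INR q * IZR m) by (rewrite Hm, mult_IZR, <- INR_IZR_INZ; ring).
    rewrite eq_intmul by auto. rewrite <- Csum_const_1. apply Csum_ext.
    intros i _. induction i; simpl; auto. rewrite IHi. apply injective_projections; simpl; ring.
  - set (z := eq_ q (IZR k)).
    assert (Hz : z <> RtoC 1).
    { intros Hz. apply H. unfold z, eq_ in Hz. injection Hz as H1 H2.
      destruct (cos_eq_1_Z _ H1) as [m Hm].
      assert (IZR k = IZR (Z.of_nat q * m)).
      { rewrite mult_IZR, <- INR_IZR_INZ. 
        apply (Rmult_eq_reg_l (2 * PI / INR q)).
        - replace (2 * PI / INR q * IZR k) with (2 * PI * IZR k / INR q) by (field; auto).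
          rewrite Hm. field. auto.
        - assert (PI > 0) by apply PI_RGT_0. apply Rmult_integral_contrapositive; split.
          + lra.
          + apply Rinv_neq_0_compat; auto. }
      apply eq_IZR in H0. rewrite H0. rewrite Z.mul_comm. apply Z_mod_mult. }
    assert (Hzq : Cpow z q = RtoC 1).
    { unfold z. rewrite <- eq_pow. apply eq_intmul; auto. }
    assert (E := geom_sum z q). rewrite Hzq in E.
    replace (Cminus (RtoC 1) (RtoC 1)) with (RtoC 0) in E by (apply injective_projections; simpl; ring).
    assert (Hnz : Cminus (RtoC 1) z <> RtoC 0).
    { intros E2. apply Hz. apply injective_projections; injection E2 as E3 E4; simpl in *; lra. }
    set (S := Csum q (fun p : nat => Cpow z p)) in *.
    assert (ES : S = Cmult (Cinv (Cminus (RtoC 1) z)) (Cmult (Cminus (RtoC 1) z) S)) by (field; auto).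
    rewrite ES, E. apply injective_projections; simpl; ring.
Qed.

Open Scope R_scope.
Lemma riemann_seq (F : R -> R) (g : nat -> R) (n s : nat) :
  Riemann_sum F (SF_seq_f2 (fun x y => x) (seq.map g (seq.iota s (S (S n))))) =
  RS (S n) (fun i => (g (S (s + i)%nat) - g (s + i)%nat) * F (g (s + i)%nat)).
Proof.
  revert s; induction n; intros s.
  - simpl. unfold Riemann_sum; simpl. rewrite Nat.add_0_r.
    rewrite plus_zero_r. unfold scal; simpl; unfold mult; simpl. ring.
  - change (seq.map g (seq.iota s (S (S (S n))))) with
      (g s :: seq.map g (seq.iota (S s) (S (S n))))%list.
    rewrite SF_cons_f2 by (simpl; lia).
    rewrite Riemann_sum_cons. rewrite IHn. rewrite (RS_front (S n)).
    simpl. rewrite Nat.add_0_r.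
    unfold plus, scal; simpl; unfold mult; simpl.
    f_equal. rewrite !Nat.add_succ_r. f_equal. apply RS_ext. intros i _. rewrite Nat.add_succ_r. reflexivity.
Qed.

Lemma riemann_unif_val (F : R -> R) (n : nat) :
  Riemann_sum F (SF_seq_f2 (fun x y => x) (unif_part 0 1 n)) =
  RS (S n) (fun j => F (INR j / INR (S n))) / INR (S n).
Proof.
  unfold unif_part, seq.mkseq. rewrite riemann_seq. simpl (0 + _)%nat.
  unfold Rdiv. rewrite Rmult_comm. rewrite <- RS_scal. apply RS_ext.
  intros i _. rewrite S_INR. rewrite (S_INR n).
  replace (0 + (INR i + 1) * (1 - 0) * / (INR n + 1) - (0 + INR i * (1 - 0) * / (INR n + 1)))
    with (/ (INR n + 1)) by (field; rewrite <- S_INR; apply not_0_INR; lia).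
  f_equal. f_equal. field. rewrite <- S_INR; apply not_0_INR; lia.
Qed.

Lemma riemann_unif (F : R -> R) (I : R) : is_RInt F 0 1 I ->
  forall eps, 0 < eps -> exists M0 : nat, forall m, (M0 <= m)%nat ->
    Rabs (RS m (fun j => F (INR j / INR m)) / INR m - I) < eps.
Proof.
  intros HI eps Heps.
  assert (Hb : locally I (ball I (mkposreal _ Heps))) by apply locally_ball.
  specialize (HI _ Hb). unfold filtermap, Riemann_fine, within, locally_dist in HI.
  destruct HI as [delta Hd].
  destruct (nfloor_ex (/ delta)) as [k Hk]. { left; apply Rinv_0_lt_compat, cond_pos. }
  exists (S (S k)). intros m Hm.
  destruct m as [|n]; [lia|].
  rewrite <- riemann_unif_val.
  assert (Hr := Riemann_fine_unif_part (fun x y => x) 0 1 n).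
  destruct Hr as [H1 [H2 [H3 H4]]]; [intros; lra|lra|].
  specialize (Hd (SF_seq_f2 (fun x y => x) (unif_part 0 1 n))).
  assert (Hn : INR (S k) <= INR n) by (apply le_INR; lia).
  rewrite S_INR in Hn.
  assert (Hdpos := cond_pos delta). assert (Hk0 := pos_INR k).
  assert (Hst : seq_step (SF_lx (SF_seq_f2 (fun x y : R => x) (unif_part 0 1 n))) < delta).
  { eapply Rle_lt_trans; [exact H1|].
    replace ((1 - 0) / (INR n + 1)) with (/ (INR n + 1)) by (field; lra).
    rewrite <- (Rinv_inv delta). apply Rinv_lt_contravar.
    - apply Rmult_lt_0_compat; [apply Rinv_0_lt_compat; lra| lra].
    - lra. }
  specialize (Hd Hst). 
  assert (Hc : pointed_subdiv (SF_seq_f2 (fun x y : R => x) (unif_part 0 1 n)) /\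
    SF_h (SF_seq_f2 (fun x y : R => x) (unif_part 0 1 n)) = Rmin 0 1 /\
    seq.last (SF_h (SF_seq_f2 (fun x y : R => x) (unif_part 0 1 n)))
      (SF_lx (SF_seq_f2 (fun x y : R => x) (unif_part 0 1 n))) = Rmax 0 1).
  { rewrite Rmin_left, Rmax_right by lra. auto. }
  specialize (Hd Hc).
  revert Hd. unfold ball; simpl. unfold AbsRing_ball, abs, minus, plus, opp; simpl.
  replace (sign (1 - 0)) with 1.
  - unfold scal; simpl; unfold mult; simpl. rewrite Rmult_1_l. auto.
  - rewrite Rminus_0_r. symmetry. apply sign_eq_1. lra.
Qed.

Lemma F_int (phi : R -> C) : ex_RInt phi 0 1 ->
  ex_RInt (fun x => Cmod (phi x) ^ 2) 0 1.
Proof.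
  intros H.
  destruct (ex_RInt_ub phi 0 1 H) as [M HM].
  set (M' := Rmax 1 M).
  assert (HM'0 : 0 < M') by (unfold M'; generalize (Rmax_l 1 M); lra).
  assert (Hre : ex_RInt (fun t => fst (phi t)) 0 1).
  { apply (ex_RInt_fct_extend_fst (U:=R_NormedModule) (V:=R_NormedModule)). exact H. }
  assert (Him : ex_RInt (fun t => snd (phi t)) 0 1).
  { apply (ex_RInt_fct_extend_snd (U:=R_NormedModule) (V:=R_NormedModule)). exact H. }
  assert (Hbd : forall t, Rmin 0 1 <= t <= Rmax 0 1 -> Cmod (phi t) <= M').
  { intros t Ht. rewrite Cmod_norm. eapply Rle_trans; [apply HM; auto|]. apply Rmax_r. }
  apply ex_RInt_Reals_0 in Hre. apply ex_RInt_Reals_0 in Him.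
  assert (H1 := sq_integrable _ _ _ _ HM'0 (fun t Ht => Rle_trans _ _ _
        (Rle_trans _ _ _ (Rmax_l _ _) (Rmax_Cmod (phi t))) (Hbd t Ht)) Hre).
  assert (H2 := sq_integrable _ _ _ _ HM'0 (fun t Ht => Rle_trans _ _ _
        (Rle_trans _ _ _ (Rmax_r _ _) (Rmax_Cmod (phi t))) (Hbd t Ht)) Him).
  assert (H3 := RiemannInt_P10 1 H1 H2).
  apply ex_RInt_Reals_1 in H3.
  eapply ex_RInt_ext; [|exact H3].
  intros x _. generalize (Cmod2_alt (phi x)). unfold Re, Im. intros E. change (fst (phi x) * fst (phi x) + 1 * (snd (phi x) * snd (phi x)) = Cmod (phi x) ^ 2). rewrite E. ring.
Qed.

Open Scope Z_scope.

Lemma div_cofactor (a b q : Z) : 0 < q -> (q | a * b) -> (q / Z.gcd a q | b).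
Proof.
  intros Hq Hd.
  set (G := Z.gcd a q).
  assert (HG : 0 < G). { unfold G. assert (0 <= Z.gcd a q) by apply Z.gcd_nonneg.
    destruct (Z.eq_dec (Z.gcd a q) 0) as [E|E]; [|lia]. apply Z.gcd_eq_0 in E. lia. }
  destruct (Z.gcd_divide_l a q) as [a1 Ha1]. destruct (Z.gcd_divide_r a q) as [q1 Hq1].
  fold G in Ha1, Hq1.
  assert (Hq1e : q / G = q1) by (rewrite Hq1; apply Z.div_mul; lia).
  rewrite Hq1e.
  assert (Hc : Z.gcd q1 a1 = 1).
  { rewrite Z.gcd_comm. assert (E := Z.gcd_div_gcd a q G ltac:(lia) eq_refl).
    assert (a / G = a1) by (rewrite Ha1; apply Z.div_mul; lia).
    rewrite <- Hq1e, <- H. exact E. }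
  apply Z.gauss with a1; [|exact Hc].
  rewrite Ha1, Hq1 in Hd. 
  apply (Z.mul_divide_cancel_r _ _ G); [lia|].
  replace (a1 * b * G) with (a1 * G * b) by ring. exact Hd.
Qed.

Open Scope nat_scope.

Lemma NoDup_map_inj_on {A B} (f : A -> B) (l : list A) :
  NoDup l -> (forall x y, In x l -> In y l -> f x = f y -> x = y) -> NoDup (map f l).
Proof.
  induction l as [|a l IH]; intros Hn Hi; simpl; constructor.
  - intros Hin. apply in_map_iff in Hin as [y [Hy Hyl]].
    inversion Hn; subst. assert (y = a) by (apply Hi; simpl; auto). subst; contradiction.
  - inversion Hn; subst. apply IH; auto. intros; apply Hi; simpl; auto.
Qed.

Lemma count_congr (l : list nat) (E L : nat) : 0 < L -> NoDup l ->
  (forall x, In x l -> x < E * L) ->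
  (forall x y, In x l -> In y l -> x mod L = y mod L) -> length l <= E.
Proof.
  intros HL Hn Hb Hc.
  rewrite <- (length_map (fun x => x / L)).
  transitivity (length (seq 0 E)); [| rewrite length_seq; lia].
  apply NoDup_incl_length.
  - apply NoDup_map_inj_on; auto. intros x y Hx Hy Hxy.
    rewrite (Nat.div_mod x L), (Nat.div_mod y L) by lia. rewrite Hxy, (Hc x y Hx Hy). reflexivity.
  - intros z Hz. apply in_map_iff in Hz as [x [Hx Hxl]]. subst. apply in_seq.
    split; [lia|]. simpl. apply Nat.Div0.div_lt_upper_bound. specialize (Hb x Hxl). lia.
Qed.

Open Scope nat_scope.

Definition sqb (q h h' : nat) : bool :=
  Z.eqb (Z.modulo (Z.of_nat (h*h) - Z.of_nat (h'*h')) (Z.of_nat q)) 0.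
Definition cls (q h x : nat) : nat := Z.to_nat (Z.gcd (Z.of_nat x - Z.of_nat h) (Z.of_nat q)).
Definition ez (q G : nat) : Z := Z.gcd (Z.of_nat G) (Z.of_nat q / Z.of_nat G).

Lemma class_props q h x G : 0 < q -> sqb q h x = true -> cls q h x = G ->
  (Z.divide (Z.of_nat G) (Z.of_nat x - Z.of_nat h) /\
   Z.divide (Z.of_nat q / Z.of_nat G) (Z.of_nat x + Z.of_nat h))%Z.
Proof.
  intros Hq Hs Hc. unfold sqb in Hs. apply Z.eqb_eq in Hs.
  apply Z.mod_divide in Hs; [|lia].
  assert (HG : Z.of_nat G = Z.gcd (Z.of_nat x - Z.of_nat h) (Z.of_nat q)).
  { rewrite <- Hc. unfold cls. rewrite Z2Nat.id; auto. apply Z.gcd_nonneg. }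
  split.
  - rewrite HG. apply Z.gcd_divide_l.
  - rewrite HG. apply div_cofactor; [lia|].
    rewrite !Nat2Z.inj_mul in Hs.
    replace ((Z.of_nat x - Z.of_nat h) * (Z.of_nat x + Z.of_nat h))%Z with
      (- (Z.of_nat h * Z.of_nat h - Z.of_nat x * Z.of_nat x))%Z by ring.
    apply Z.divide_opp_r. exact Hs.
Qed.

Lemma filter_length_zero {A} (P : A -> bool) l : (forall x, In x l -> P x = false) -> length (filter P l) = 0.
Proof. induction l; simpl; intros H; auto. rewrite H by auto. apply IHl. intros; apply H; auto. Qed.

Lemma class_count q h G : 0 < q -> 0 < G -> Nat.divide G q ->
  length (filter (fun x => sqb q h x && Nat.eqb (cls q h x) G) (seq 0 q)) <=
  (if Z.eqb ((2 * Z.of_nat h) mod ez q G) 0 then Z.to_nat (ez q G) else 0).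
Proof.
  intros Hq HG0 HGq.
  set (Gz := Z.of_nat G). set (qz := Z.of_nat q). set (nz := (qz / Gz)%Z). set (e := ez q G).
  assert (HGz : (0 < Gz)%Z) by (unfold Gz; lia).
  assert (Hqz : (0 < qz)%Z) by (unfold qz; lia).
  assert (HGqz : (Gz | qz)%Z) by (destruct HGq as [k Hk]; exists (Z.of_nat k); unfold qz, Gz; rewrite Hk; lia).
  assert (Hnq : (Gz * nz = qz)%Z) by (unfold nz; rewrite <- Z.divide_div_mul_exact by (auto; lia);
        rewrite Z.mul_comm, Z.div_mul by lia; reflexivity).
  assert (Hnz : (0 < nz)%Z) by nia.
  assert (He0 : (0 < e)%Z).
  { unfold e, ez. fold Gz qz nz. assert (0 <= Z.gcd Gz nz)%Z by apply Z.gcd_nonneg.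
    destruct (Z.eq_dec (Z.gcd Gz nz) 0) as [E|E]; [|lia]. apply Z.gcd_eq_0 in E. lia. }
  assert (HeG : (e | Gz)%Z) by apply Z.gcd_divide_l.
  assert (Hen : (e | nz)%Z) by apply Z.gcd_divide_r.
  set (l := filter _ (seq 0 q)).
  assert (Hmem : forall x, In x l -> (Gz | Z.of_nat x - Z.of_nat h)%Z /\ (nz | Z.of_nat x + Z.of_nat h)%Z).
  { intros x Hx. unfold l in Hx. apply filter_In in Hx as [_ Hx]. apply andb_true_iff in Hx as [H1 H2].
    apply Nat.eqb_eq in H2. apply (class_props q h x G Hq H1 H2). }
  destruct (Z.eqb_spec ((2 * Z.of_nat h) mod e) 0) as [H2h|H2h].
  -
    set (Lz := (qz / e)%Z).
    assert (Heq : (e | qz)%Z) by exact (Z.divide_trans _ _ _ HeG HGqz).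
    assert (HLq : (e * Lz = qz)%Z) by (unfold Lz; rewrite <- Z.divide_div_mul_exact by (auto; lia);
        rewrite Z.mul_comm, Z.div_mul by lia; reflexivity).
    assert (HLz : (0 < Lz)%Z) by nia.
    assert (Hlcm : Z.lcm Gz nz = Lz).
    { unfold Z.lcm. fold e. unfold e, ez. fold Gz qz nz.
      rewrite <- Z.divide_div_mul_exact; [|change (Z.gcd Gz nz) with e; lia|exact Hen]. rewrite Hnq. change (Z.gcd Gz nz) with e. rewrite Z.abs_eq; [reflexivity|].
      apply Z.div_pos; lia. }
    apply (count_congr l (Z.to_nat e) (Z.to_nat Lz)); [lia| | |].
    + unfold l. apply NoDup_filter, seq_NoDup.
    + intros x Hx. unfold l in Hx. apply filter_In in Hx as [Hx _]. apply in_seq in Hx.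
      assert (q = Z.to_nat e * Z.to_nat Lz) by (rewrite <- Z2Nat.inj_mul by lia; rewrite HLq; unfold qz; lia).
      lia.
    + intros x y Hx Hy. destruct (Hmem x Hx) as [A1 A2]. destruct (Hmem y Hy) as [B1 B2].
      assert (Hd : (Lz | Z.of_nat x - Z.of_nat y)%Z).
      { rewrite <- Hlcm. apply Z.lcm_least.
        - replace (Z.of_nat x - Z.of_nat y)%Z with ((Z.of_nat x - Z.of_nat h) - (Z.of_nat y - Z.of_nat h))%Z by ring.
          apply Z.divide_sub_r; auto.
        - replace (Z.of_nat x - Z.of_nat y)%Z with ((Z.of_nat x + Z.of_nat h) - (Z.of_nat y + Z.of_nat h))%Z by ring.
          apply Z.divide_sub_r; auto. }
      apply Nat2Z.inj. rewrite !Nat2Z.inj_mod. rewrite Z2Nat.id by lia.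
      destruct Hd as [k Hk]. replace (Z.of_nat x) with (Z.of_nat y + k * Lz)%Z by lia.
      apply Z_mod_plus_full.
  - unfold l at 1. rewrite filter_length_zero; [lia|].
    intros x Hx. destruct (sqb q h x && Nat.eqb (cls q h x) G) eqn:Ex; auto.
    exfalso. apply H2h. apply Z.mod_divide; [lia|].
    assert (Hl : In x l) by (unfold l; apply filter_In; auto).
    destruct (Hmem x Hl) as [A1 A2].
    replace (2 * Z.of_nat h)%Z with ((Z.of_nat x + Z.of_nat h) - (Z.of_nat x - Z.of_nat h))%Z by ring.
    apply Z.divide_sub_r; [exact (Z.divide_trans _ _ _ Hen A2) | exact (Z.divide_trans _ _ _ HeG A1)].
Qed.

Open Scope R_scope.

Definition lsum (L : list nat) (w : nat -> R) : R := fold_right (fun g acc => w g + acc) 0 L.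

Lemma lsum_ge_term L w y : (forall g, In g L -> 0 <= w g) -> In y L -> w y <= lsum L w.
Proof.
  induction L as [|a L IH]; simpl; intros H Hy; [contradiction|].
  assert (0 <= lsum L w).
  { clear IH Hy. induction L; simpl; [lra|]. assert (0 <= w a0) by (apply H; simpl; auto).
    assert (0 <= lsum L w) by (apply IHL; intros; apply H; simpl in *; tauto). lra. }
  destruct Hy as [<-|Hy].
  - lra.
  - assert (0 <= w a) by (apply H; simpl; auto). specialize (IH (fun g Hg => H g (or_intror Hg)) Hy). lra.
Qed.

Lemma lsum_le L v w : (forall g, In g L -> v g <= w g) -> lsum L v <= lsum L w.
Proof. induction L; simpl; intros H; [lra|]. apply Rplus_le_compat; [apply H; auto|apply IHL; auto]. Qed.

Lemma lsum_scal L w c : lsum L (fun g => c * w g) = c * lsum L w.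
Proof. induction L; simpl; [ring|rewrite IHL; ring]. Qed.

Lemma lsum_const_bound L w c : (forall g, In g L -> w g <= c) -> lsum L w <= INR (length L) * c.
Proof. induction L; intros H; simpl lsum; simpl length; [simpl; lra|]. rewrite S_INR.
  assert (w a <= c) by (apply H; simpl; auto). assert (lsum L w <= INR (length L) * c) by (apply IHL; intros; apply H; simpl; auto). lra. Qed.

Lemma RS_lsum n L F : RS n (fun i => lsum L (fun g => F i g)) = lsum L (fun g => RS n (fun i => F i g)).
Proof.
  induction L; simpl.
  - induction n; simpl; [auto|rewrite IHn; ring].
  - rewrite <- IHL. clear IHL. induction n; simpl; [ring|]. rewrite IHn. ring.
Qed.

Lemma RS_swap n m F : RS n (fun i => RS m (fun j => F i j)) = RS m (fun j => RS n (fun i => F i j)).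
Proof.
  induction n; simpl.
  - induction m; simpl; [auto|rewrite <- IHm; ring].
  - rewrite IHn. clear IHn. induction m; simpl; [ring|]. rewrite <- IHm. ring.
Qed.

Lemma RS_plus n f g : RS n (fun i => f i + g i) = RS n f + RS n g.
Proof. induction n; simpl; [ring|rewrite IHn; ring]. Qed.

Lemma RS_nonneg n f : (forall i, (i < n)%nat -> 0 <= f i) -> 0 <= RS n f.
Proof. induction n; intros H; simpl; [lra|].
  assert (0 <= RS n f) by (apply IHn; intros; apply H; lia). assert (0 <= f n) by (apply H; lia). lra. Qed.

Lemma RS_zero n : RS n (fun _ => 0) = 0.
Proof. induction n; simpl; [auto|rewrite IHn; ring]. Qed.

Lemma RS_add a b f : RS (a + b) f = RS a f + RS b (fun i => f (a + i)%nat).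
Proof. induction b; simpl. rewrite Nat.add_0_r; ring. rewrite Nat.add_succ_r. simpl. rewrite IHb. ring. Qed.



Lemma RS_count n (P : nat -> bool) : RS n (fun x => if P x then 1 else 0) = INR (length (filter P (seq 0 n))).
Proof.
  induction n; [simpl; auto|]. simpl RS. rewrite seq_S, filter_app, length_app, plus_INR, IHn. simpl.
  destruct (P n); simpl; ring.
Qed.

Definition divl (q : nat) := filter (fun d => Nat.eqb (q mod d) 0) (seq 1 q).

Lemma divl_props q G : In G (divl q) -> (0 < G)%nat /\ Nat.divide G q.
Proof.
  unfold divl. intros H. apply filter_In in H as [H1 H2]. apply in_seq in H1.
  apply Nat.eqb_eq in H2. split; [lia|]. apply Nat.mod_divide; [lia|auto].
Qed.

Lemma cls_in q h x : (0 < q)%nat -> In (cls q h x) (divl q).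
Proof.
  intros Hq. unfold cls, divl.
  set (gz := Z.gcd (Z.of_nat x - Z.of_nat h) (Z.of_nat q)).
  assert (Hg0 : (0 < gz)%Z).
  { assert (0 <= gz)%Z by apply Z.gcd_nonneg. destruct (Z.eq_dec gz 0) as [E|E]; [|lia].
    apply Z.gcd_eq_0 in E. lia. }
  assert (Hgq : (gz | Z.of_nat q)%Z) by apply Z.gcd_divide_r.
  assert (Hle : (gz <= Z.of_nat q)%Z) by (apply Z.divide_pos_le; auto; lia).
  apply filter_In. split.
  - apply in_seq. lia.
  - apply Nat.eqb_eq. apply Nat2Z.inj. rewrite Nat2Z.inj_mod, Z2Nat.id by lia.
    simpl. apply Z.mod_divide; [lia|auto].
Qed.

Lemma rcount_bound q h : (0 < q)%nat ->
  RS q (fun x => if sqb q h x then 1 else 0) <=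
  lsum (divl q) (fun G => INR (if Z.eqb ((2 * Z.of_nat h) mod ez q G) 0 then Z.to_nat (ez q G) else 0)).
Proof.
  intros Hq.
  apply Rle_trans with (RS q (fun x => lsum (divl q) (fun G => if sqb q h x && Nat.eqb (cls q h x) G then 1 else 0))).
  - apply RS_le. intros x _. destruct (sqb q h x) eqn:Es.
    + simpl. apply Rle_trans with ((fun G => if Nat.eqb (cls q h x) G then 1 else 0) (cls q h x)).
      * rewrite Nat.eqb_refl. lra.
      * apply (lsum_ge_term (divl q) (fun G => if Nat.eqb (cls q h x) G then 1 else 0) (cls q h x)); [intros; destruct (_ =? _)%nat; lra|]. apply cls_in; auto.
    + simpl. clear. induction (divl q); simpl; lra.
  - rewrite RS_lsum. apply lsum_le. intros G HG. rewrite RS_count. apply le_INR.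
    destruct (divl_props q G HG) as [H1 H2]. apply class_count; auto.
Qed.

Open Scope R_scope.

Lemma E_prod q p h h' :
  Cmult (eq_ q (INR (p * h * h))) (Cconj (eq_ q (INR (p * h' * h')))) =
  Cpow (eq_ q (IZR (Z.of_nat (h*h) - Z.of_nat (h'*h')))) p.
Proof.
  rewrite eq_conj, eq_mult, <- eq_pow. f_equal.
  rewrite minus_IZR, <- !INR_IZR_INZ, !mult_INR. ring.
Qed.

Lemma second_moment (phi : R -> C) (q : nat) : (0 < q)%nat ->
  RS q (fun p => Cmod (gauss phi p q) ^ 2) <=
  INR q * RS q (fun h => RS q (fun h' =>
     if sqb q h h' then Cmod (phi (INR h / INR q)) * Cmod (phi (INR h' / INR q)) else 0)).
Proof.
  intros Hq.
  set (f := fun h => phi (INR h / INR q)).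
  set (T := Csum q (fun h => Csum q (fun h' =>
       Cmult (Cmult (f h) (Cconj (f h'))) (if sqb q h h' then RtoC (INR q) else RtoC 0)))).
  assert (Heq : RtoC (RS q (fun p => Cmod (gauss phi p q) ^ 2)) = T).
  { rewrite Csum_RS.
    transitivity (Csum q (fun p => Csum q (fun h => Csum q (fun h' =>
       Cmult (Cmult (f h) (Cconj (f h'))) (Cpow (eq_ q (IZR (Z.of_nat (h*h) - Z.of_nat (h'*h')))) p))))).
    - apply Csum_ext. intros p _. rewrite Cmod2_conj. unfold gauss.
      rewrite Csum_conj, Csum_mult. apply Csum_ext; intros h _. apply Csum_ext; intros h' _.
      rewrite <- E_prod. rewrite Cmult_conj. fold (f h) (f h'). ring.
    - rewrite Csum_swap. unfold T. apply Csum_ext; intros h _.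
      rewrite Csum_swap. apply Csum_ext; intros h' _.
      rewrite Csum_scal. f_equal. rewrite char_sum by auto. reflexivity. }
  assert (HT : Re T <= Cmod T) by (eapply Rle_trans; [apply Rle_abs|apply re_le_Cmod]).
  replace (RS q (fun p => Cmod (gauss phi p q) ^ 2)) with (Re T) by (rewrite <- Heq; reflexivity).
  eapply Rle_trans; [exact HT|].
  unfold T. eapply Rle_trans; [apply Cmod_Csum|].
  rewrite <- RS_scal. apply RS_le; intros h _.
  eapply Rle_trans; [apply Cmod_Csum|].
  rewrite <- RS_scal. apply RS_le; intros h' _.
  rewrite !Cmod_mult, Cmod_conj. fold (f h) (f h').
  destruct (sqb q h h').
  - rewrite Cmod_R, Rabs_right by (apply Rle_ge, pos_INR). lra.
  - rewrite Cmod_0. lra.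
Qed.

Open Scope R_scope.

Lemma sqb_sym q h x : sqb q h x = sqb q x h.
Proof.
  unfold sqb. destruct (Z.eqb_spec ((Z.of_nat (h * h) - Z.of_nat (x * x)) mod Z.of_nat q) 0) as [E|E];
  destruct (Z.eqb_spec ((Z.of_nat (x * x) - Z.of_nat (h * h)) mod Z.of_nat q) 0) as [E'|E']; auto.
  - exfalso. apply E'. replace (Z.of_nat (x * x) - Z.of_nat (h * h))%Z with (- (Z.of_nat (h * h) - Z.of_nat (x * x)))%Z by ring.
    apply Z_mod_zero_opp_full. auto.
  - exfalso. apply E. replace (Z.of_nat (h * h) - Z.of_nat (x * x))%Z with (- (Z.of_nat (x * x) - Z.of_nat (h * h)))%Z by ring.
    apply Z_mod_zero_opp_full. auto.
Qed.

Lemma amgm q (a : nat -> R) :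
  RS q (fun h => RS q (fun x => if sqb q h x then a h * a x else 0)) <=
  RS q (fun h => a h ^ 2 * RS q (fun x => if sqb q h x then 1 else 0)).
Proof.
  apply Rle_trans with (RS q (fun h => RS q (fun x =>
     / 2 * ((if sqb q h x then a h ^ 2 else 0) + (if sqb q h x then a x ^ 2 else 0))))).
  - apply RS_le; intros h _. apply RS_le; intros x _. destruct (sqb q h x); [|lra].
    assert (0 <= (a h - a x) ^ 2) by (apply pow2_ge_0). nra.
  - right.
    transitivity (RS q (fun h => / 2 * (RS q (fun x => if sqb q h x then a h ^ 2 else 0)) +
                                / 2 * (RS q (fun x => if sqb q h x then a x ^ 2 else 0)))).
    + apply RS_ext; intros h _. rewrite <- !RS_scal, <- RS_plus. apply RS_ext; intros; ring.
    + rewrite RS_plus, !RS_scal.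
      rewrite (RS_swap q q (fun h x => if sqb q h x then a x ^ 2 else 0)).
      transitivity (RS q (fun h => RS q (fun x => if sqb q h x then a h ^ 2 else 0))).
      * assert (RS q (fun j => RS q (fun i => if sqb q i j then a j ^ 2 else 0)) =
                RS q (fun h => RS q (fun x => if sqb q h x then a h ^ 2 else 0))).
        { apply RS_ext; intros h _; apply RS_ext; intros x _. rewrite sqb_sym. auto. }
        cbv beta in *. rewrite H. field.
      * apply RS_ext; intros h _. rewrite <- RS_scal. apply RS_ext; intros x _.
        destruct (sqb q h x); ring.
Qed.

Definition en (q G : nat) : nat := Z.to_nat (ez q G).
Definition ep (q G : nat) : nat := if Nat.even (en q G) then (en q G / 2)%nat else en q G.

Lemma ez_facts q G : (0 < q)%nat -> In G (divl q) ->
  (0 < ez q G)%Z /\ (ez q G * ez q G | Z.of_nat q)%Z.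
Proof.
  intros Hq HG. destruct (divl_props q G HG) as [HG0 HGq].
  set (Gz := Z.of_nat G). set (qz := Z.of_nat q). set (nz := (qz / Gz)%Z).
  assert (HGqz : (Gz | qz)%Z) by (destruct HGq as [k Hk]; exists (Z.of_nat k); unfold qz, Gz; rewrite Hk; lia).
  assert (Hnq : (Gz * nz = qz)%Z) by (unfold nz; rewrite <- Z.divide_div_mul_exact by (auto; lia);
        rewrite Z.mul_comm, Z.div_mul by lia; reflexivity).
  unfold ez. fold Gz qz nz. split.
  - assert (0 <= Z.gcd Gz nz)%Z by apply Z.gcd_nonneg.
    destruct (Z.eq_dec (Z.gcd Gz nz) 0) as [E|E]; [|lia]. apply Z.gcd_eq_0 in E. lia.
  - rewrite <- Hnq. eapply Z.divide_trans; [apply Z.mul_divide_mono_r, Z.gcd_divide_l|apply Z.mul_divide_mono_l, Z.gcd_divide_r].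
Qed.

Lemma ep_facts q G : (0 < q)%nat -> In G (divl q) ->
  (0 < ep q G)%nat /\ Nat.divide (ep q G * ep q G) q /\ (en q G <= 2 * ep q G)%nat /\
  (forall h, ((2 * Z.of_nat h) mod ez q G = 0)%Z -> (h mod ep q G = 0)%nat).
Proof.
  intros Hq HG. destruct (ez_facts q G Hq HG) as [He0 Hediv].
  assert (Hen : Z.of_nat (en q G) = ez q G) by (unfold en; rewrite Z2Nat.id; lia).
  assert (Hen0 : (0 < en q G)%nat) by lia.
  assert (Hee : Nat.divide (en q G * en q G) q).
  { destruct Hediv as [k Hk]. exists (Z.to_nat k). apply Nat2Z.inj.
    assert (0 <= k)%Z by nia. rewrite !Nat2Z.inj_mul, Z2Nat.id, Hen by lia. lia. }
  unfold ep. destruct (Nat.even (en q G)) eqn:Ev.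
  - apply Nat.even_spec in Ev. destruct Ev as [c Hc]. rewrite Hc.
    rewrite Nat.mul_comm, Nat.div_mul by lia.
    split; [lia|]. split; [|split; [lia|]].
    + eapply Nat.divide_trans; [|exact Hee]. rewrite Hc. exists 4%nat. lia.
    + intros h Hh. apply Z.mod_divide in Hh; [|lia]. rewrite <- Hen, Hc in Hh.
      destruct Hh as [k Hk]. assert (0 <= k)%Z by nia.
      apply Nat.mod_divide; [lia|]. exists (Z.to_nat k). nia.
  - split; [lia|]. split; [exact Hee|]. split; [lia|].
    intros h Hh. apply Z.mod_divide in Hh; [|lia]. rewrite <- Hen in Hh.
    apply Nat.mod_divide; [lia|].
    apply Nat.gauss with 2%nat.
    + destruct Hh as [k Hk]. assert (0 <= k)%Z by nia. exists (Z.to_nat k). nia.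
    + assert (Hd1 := Nat.gcd_divide_r (en q G) 2). assert (Hd2 := Nat.gcd_divide_l (en q G) 2).
      assert (Hle : (Nat.gcd (en q G) 2 <= 2)%nat) by (apply Nat.divide_pos_le; auto; lia).
      assert (Hpos : (0 < Nat.gcd (en q G) 2)%nat).
      { destruct (Nat.gcd (en q G) 2) eqn:E; [|lia]. apply Nat.gcd_eq_0 in E. lia. }
      destruct (Nat.gcd (en q G) 2) as [|[|[|n]]] eqn:E; try lia.
      exfalso. destruct Hd2 as [k Hk]. assert (Nat.even (en q G) = true).
      { rewrite Hk. apply Nat.even_spec. exists k. lia. }
      congruence.
Qed.

Lemma RS_S n f : RS (S n) f = RS n f + f n.
Proof. reflexivity. Qed.

Lemma reindex e m (w : nat -> R) : (0 < e)%nat ->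
  RS (e * m) (fun h => if Nat.eqb (h mod e) 0 then w h else 0) = RS m (fun j => w (j * e)%nat).
Proof.
  intros He. induction m.
  - rewrite Nat.mul_0_r. reflexivity.
  - replace (e * S m)%nat with (e * m + e)%nat by lia. rewrite RS_add, IHm, RS_S. f_equal.
    destruct e as [|e']; [lia|]. rewrite RS_front.
    rewrite (RS_ext _ _ (fun _ => 0)); [rewrite RS_zero|].
    + rewrite Nat.add_0_r.
      replace ((S e' * m) mod S e')%nat with 0%nat by (rewrite Nat.mul_comm, Nat.Div0.mod_mul; auto).
      rewrite Nat.eqb_refl. rewrite Nat.mul_comm. ring.
    + intros i Hi. cbv beta.
      replace ((S e' * m + S i) mod S e')%nat with (S i).
      * reflexivity.
      * replace (S e' * m + S i)%nat with (S i + m * S e')%nat by lia. rewrite Nat.Div0.mod_add. rewrite Nat.mod_small; lia.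
Qed.

Open Scope R_scope.

Lemma ep_div q G : (0 < q)%nat -> In G (divl q) ->
  q = (ep q G * (q / ep q G))%nat /\ (ep q G <= q / ep q G)%nat /\ (0 < q / ep q G)%nat.
Proof.
  intros Hq HG. destruct (ep_facts q G Hq HG) as [H0 [Hd _]].
  set (e := ep q G) in *.
  assert (He : Nat.divide e q) by (eapply Nat.divide_trans; [apply Nat.divide_factor_l|exact Hd]).
  assert (Hq' : q = (e * (q / e))%nat).
  { destruct He as [k' Hk']. assert (q / e = k')%nat by (rewrite Hk'; apply Nat.div_mul; lia). lia. }
  split; [exact Hq'|].
  destruct Hd as [k Hk].
  assert (q / e = k * e)%nat by (rewrite Hk, Nat.mul_assoc, Nat.div_mul by lia; reflexivity).
  assert (0 < k)%nat by (destruct k; lia).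
  split; nia.
Qed.

Lemma perG q G (w : nat -> R) : (0 < q)%nat -> In G (divl q) -> (forall h, 0 <= w h) ->
  RS q (fun h => w h * INR (if Z.eqb ((2 * Z.of_nat h) mod ez q G) 0 then Z.to_nat (ez q G) else 0))
  <= 2 * INR (ep q G) * RS (q / ep q G) (fun j => w (j * ep q G)%nat).
Proof.
  intros Hq HG Hw. destruct (ep_facts q G Hq HG) as [H0 [Hd [Hen Hmod]]].
  destruct (ep_div q G Hq HG) as [Hq' _].
  apply Rle_trans with (RS q (fun h => 2 * INR (ep q G) * (if Nat.eqb (h mod ep q G) 0 then w h else 0))).
  - apply RS_le. intros h _. destruct (Z.eqb_spec ((2 * Z.of_nat h) mod ez q G) 0) as [E|E].
    + rewrite (Hmod h E), Nat.eqb_refl. fold (en q G).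
      apply le_INR in Hen. rewrite mult_INR in Hen. simpl (INR 2) in Hen. specialize (Hw h). nra.
    + simpl (INR 0). rewrite Rmult_0_r. apply Rmult_le_pos.
      * apply Rmult_le_pos; [lra|apply pos_INR].
      * destruct (_ =? _)%nat; [apply Hw|lra].
  - rewrite RS_scal. apply Rmult_le_compat_l; [apply Rmult_le_pos; [lra|apply pos_INR]|].
    rewrite Hq' at 1. rewrite reindex by auto. lra.
Qed.

Lemma main_bound (phi : R -> C) q : (0 < q)%nat ->
  RS q (fun p => Cmod (gauss phi p q) ^ 2) <=
  INR q * lsum (divl q) (fun G => 2 * INR (ep q G) *
     RS (q / ep q G) (fun j => Cmod (phi (INR j / INR (q / ep q G))) ^ 2)).
Proof.
  intros Hq. set (a := fun h => Cmod (phi (INR h / INR q))).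
  eapply Rle_trans; [apply second_moment; auto|].
  apply Rmult_le_compat_l; [apply pos_INR|].
  eapply Rle_trans; [apply (amgm q a)|].
  apply Rle_trans with (RS q (fun h => lsum (divl q) (fun G => a h ^ 2 *
     INR (if Z.eqb ((2 * Z.of_nat h) mod ez q G) 0 then Z.to_nat (ez q G) else 0)))).
  - apply RS_le. intros h Hh. rewrite lsum_scal. apply Rmult_le_compat_l; [apply pow2_ge_0|].
    apply rcount_bound; auto.
  - rewrite RS_lsum. apply lsum_le. intros G HG.
    eapply Rle_trans; [apply (perG q G (fun h => a h ^ 2)); auto; intros; apply pow2_ge_0|].
    destruct (ep_div q G Hq HG) as [Hq' [_ Hm]].
    right. f_equal. apply RS_ext. intros j _. unfold a. do 3 f_equal.
    rewrite Hq' at 2. rewrite !mult_INR. field. split; apply not_0_INR; lia.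
Qed.

Module MC.
Import all_boot.
Local Open Scope nat_scope.

Lemma modn_mod (q d : nat) : 0 < d -> q %% d = Nat.modulo q d.
Proof.
  move=> Hd. apply: (Nat.mod_unique q d (q %/ d) (q %% d)).
  - apply/ltP. by rewrite ltn_pmod.
  - rewrite {1}(divn_eq q d). rewrite -multE -plusE. lia.
Qed.

Lemma seq_iota a n : List.seq a n = iota a n.
Proof. by elim: n a => //= n IH a; rewrite IH. Qed.

Lemma filter_eq {T} (P : T -> bool) (l : list T) : List.filter P l = filter P l.
Proof. by elim: l => //= x l ->. Qed.

Lemma size_length {T} (l : list T) : size l = length l.
Proof. by elim: l => //= x l ->. Qed.

Lemma ndiv_size q : 0 < q ->
  length (List.filter (fun d => Nat.eqb (Nat.modulo q d) 0) (List.seq 1 q)) =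
  size [seq d <- iota 1 q | d %| q].
Proof.
  move=> Hq. rewrite seq_iota filter_eq -size_length. congr size.
  apply: eq_in_filter => d. rewrite mem_iota => /andP [Hd _].
  rewrite /dvdn modn_mod //.
Qed.

Lemma primes_le_ndiv q : 0 < q -> size (primes q) <= size [seq d <- iota 1 q | d %| q].
Proof.
  move=> Hq. apply: uniq_leq_size; first exact: primes_uniq.
  move=> p. rewrite mem_primes mem_filter mem_iota => /and3P [pp _ pq].
  rewrite pq /= prime_gt0 //= add1n ltnS. exact: dvdn_leq.
Qed.

Lemma q_le_totient q : 0 < q -> q <= 2 ^ size (primes q) * totient q.
Proof.
  move=> Hq. rewrite totientE //.
  rewrite {1}(prod_prime_decomp Hq) prime_decompE big_map /=.
  have -> : 2 ^ size (primes q) = \prod_(p <- primes q) 2.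
  { rewrite big_const_seq count_predT. by elim: (size _) => //= n IH; rewrite expnS -IH. }
  rewrite -big_split /=. rewrite big_seq_cond [X in _ <= X]big_seq_cond.
  apply: leq_prod => p /andP [Hp _].
  have pp : prime p by move: Hp; rewrite mem_primes => /andP [].
  have He : 0 < logn p q by rewrite logn_gt0.
  have Hp2 := prime_gt1 pp.
  case: (logn p q) He => // e _ /=.
  rewrite expnS mulnA. apply: leq_mul => //.
  case: p Hp2 {Hp pp} => // p Hp2 /=. rewrite mul2n -addnn -(addn1 p) leq_add2l. exact: Hp2.
Qed.

Lemma dvd_iff d n : (d %| n) <-> Nat.divide d n.
Proof. split; [by move/dvdnP | by move=> H; apply/dvdnP]. Qed.

Lemma gcd_eq (a b : nat) : Nat.gcd a b = gcdn a b.
Proof.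
  apply: Nat.gcd_unique.
  - apply/dvd_iff. exact: dvdn_gcdl.
  - apply/dvd_iff. exact: dvdn_gcdr.
  - move=> c /dvd_iff H1 /dvd_iff H2. apply/dvd_iff. by rewrite dvdn_gcd H1 H2.
Qed.

Lemma eulerphi_totient q : 1 < q ->
  length (List.filter (fun p => Nat.eqb (Nat.gcd p q) 1) (List.seq 1 q)) = totient q.
Proof.
  move=> Hq. rewrite totient_count_coprime.
  rewrite seq_iota filter_eq -size_length size_filter.
  have -> : \sum_(0 <= i < q) (coprime q i : nat) = count (coprime q) (iota 0 q).
  { rewrite /index_iota subn0. elim: (iota 0 q) => [|x s IH]; first by rewrite big_nil.
    rewrite big_cons IH /=. by case: (coprime q x). }
  case: q Hq => [|[|r]] // _.
  have E1 : iota 0 r.+2 = 0 :: iota 1 r.+1 by [].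
  have E2 : iota 1 r.+2 = rcons (iota 1 r.+1) r.+2.
  { rewrite -cats1. have -> : r.+2 = r.+1 + 1 by rewrite addn1. rewrite iotaD addnC. by []. }
  have Hc : forall (a : pred nat) x s, count a (x :: s) = a x + count a s by [].
  rewrite E1 E2 -cats1 count_cat Hc Hc.
  have -> : coprime r.+2 0 = false by rewrite /coprime gcdn0.
  have Hd : Nat.gcd r.+2 r.+2 = r.+2 := Nat.gcd_diag _.
  have -> : (fun p : nat => Nat.gcd p r.+2 =? 1) r.+2 = false by change ((Nat.gcd r.+2 r.+2 =? 1) = false); rewrite Hd.
  have -> : count (fun p : nat => Nat.gcd p r.+2 =? 1) [::] = 0 by [].
  rewrite addn0 add0n addn0. apply: eq_in_count => x _ /=.
  rewrite gcd_eq coprime_sym /coprime.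
  by case: (Nat.eqb_spec (gcdn x r.+2) 1) => [->|/eqP /negbTE ->].
Qed.

Lemma expn_pow m n : expn m n = Nat.pow m n.
Proof. elim: n => // n IH. by rewrite expnS IH. Qed.

Lemma q_le_pow q : 1 < q ->
  Peano.le q (Nat.pow 2 (length (List.filter (fun d => Nat.eqb (Nat.modulo q d) 0) (List.seq 1 q))) *
     length (List.filter (fun p => Nat.eqb (Nat.gcd p q) 1) (List.seq 1 q))).
Proof.
  move=> Hq. have Hq0 : 0 < q by apply: ltnW.
  rewrite eulerphi_totient // ndiv_size // -expn_pow. apply/leP.
  apply: (leq_trans (q_le_totient _ Hq0)). rewrite leq_mul2r. apply/orP; right.
  rewrite leq_pexp2l //. exact: primes_le_ndiv.
Qed.

Lemma q_le_pow' q : Peano.lt 1 q ->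
  Peano.le q (Nat.pow 2 (length (List.filter (fun d => Nat.eqb (Nat.modulo q d) 0) (List.seq 1 q))) *
     length (List.filter (fun p => Nat.eqb (Nat.gcd p q) 1) (List.seq 1 q))).
Proof. move=> H. apply: q_le_pow. by apply/ltP. Qed.
End MC.

Open Scope R_scope.

Lemma lsum_app l1 l2 w : lsum (l1 ++ l2) w = lsum l1 w + lsum l2 w.
Proof. induction l1; simpl; [ring|rewrite IHl1; ring]. Qed.

Lemma lsum_seq q w : lsum (seq 0 q) w = RS q w.
Proof. induction q; [reflexivity|]. rewrite seq_S, lsum_app, IHq. simpl. ring. Qed.

Lemma lsum_filter_le (U : nat -> bool) l w : (forall x, 0 <= w x) -> lsum (filter U l) w <= lsum l w.
Proof. induction l; simpl; intros H; [lra|]. destruct (U a); simpl; specialize (IHl H); specialize (H a); lra. Qed.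

Lemma count_le (P : nat -> bool) l w c : (forall x, 0 <= w x) -> (forall x, P x = true -> c <= w x) ->
  INR (length (filter P l)) * c <= lsum l w.
Proof.
  induction l; simpl; intros H1 H2; [lra|]. specialize (IHl H1 H2).
  destruct (P a) eqn:E.
  - simpl length. rewrite S_INR. specialize (H2 a E). lra.
  - specialize (H1 a). lra.
Qed.

Lemma units_seq0 q : (2 <= q)%nat ->
  units_list q = filter (fun p => Nat.eqb (Nat.gcd p q) 1) (seq 0 q).
Proof.
  intros Hq. unfold units_list. destruct q as [|q']; [lia|].
  replace (seq 1 (S q')) with (seq 1 q' ++ (S q' :: nil)) by (rewrite <- seq_S; reflexivity).
  rewrite filter_app. destruct q' as [|q'']; [lia|].
  change (seq 0 (S (S q''))) with (0 :: seq 1 (S q''))%nat.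
  assert (E1 : filter (fun p : nat => (Nat.gcd p (S (S q'')) =? 1)%nat) (S (S q'') :: nil) = nil).
  { cbn [filter]. rewrite Nat.gcd_diag. reflexivity. }
  rewrite E1, app_nil_r. reflexivity.
Qed.

Lemma q_le_phiR q : (2 <= q)%nat -> INR q <= 2 ^ (ndiv q) * INR (eulerphi q).
Proof.
  intros Hq. assert (H := MC.q_le_pow' q ltac:(lia)).
  apply le_INR in H. rewrite mult_INR, pow_INR in H. simpl (INR 2) in H. exact H.
Qed.

Theorem lemma6p1 (N : nat) (HN : (0 < N)%nat) :
  forall eps : R, 0 < eps ->
  exists K : R, 0 < K /\
  forall phi : R -> C,
    periodic1 phi ->
    ex_RInt phi 0 1 ->
    forall delta : R, 0 < delta ->
    exists Q : nat, forall q : nat, (Q <= q)%nat -> (ndiv q <= N)%nat ->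
      INR (large_count phi K q) / INR (eulerphi q) <= eps * L2sq phi + delta.
Proof.
  intros eps Heps.
  set (C0 := 2 * INR N * 2 ^ N / eps).
  assert (HN' : 1 <= INR N) by (apply (le_INR 1); lia).
  assert (H2N : 1 <= 2 ^ N) by (apply pow_R1_Rle; lra).
  assert (HC0 : 0 < C0) by (unfold C0; apply Rdiv_lt_0_compat; [nra|auto]).
  exists (sqrt C0). split; [apply sqrt_lt_R0; auto|].
  intros phi _ Hint delta Hdelta.
  set (F := fun x => Cmod (phi x) ^ 2).
  assert (Hex : ex_RInt F 0 1) by (apply F_int; auto).
  set (I := L2sq phi).
  assert (HI : is_RInt F 0 1 I) by (unfold I, L2sq; exact (RInt_correct F 0 1 Hex)).
  assert (HI0 : 0 <= I).
  { unfold I, L2sq. apply RInt_ge_0; [lra|exact Hex|]. intros; apply pow2_ge_0. }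
  set (eps' := delta / eps).
  assert (Heps' : 0 < eps') by (apply Rdiv_lt_0_compat; auto).
  destruct (riemann_unif F I HI eps' Heps') as [M0 HM0].
  exists (Nat.max 2 (M0 * M0)). intros q Hq Hnd.
  assert (Hq2 : (2 <= q)%nat) by lia.
  assert (Hq0 : (0 < q)%nat) by lia.
  set (S := RS q (fun p => Cmod (gauss phi p q) ^ 2)).
  assert (HS : S <= INR q * (INR N * (2 * INR q * (I + eps')))).
  { eapply Rle_trans; [apply main_bound; auto|].
    apply Rmult_le_compat_l; [apply pos_INR|].
    eapply Rle_trans; [apply lsum_const_bound with (c := 2 * INR q * (I + eps'))|].
    - intros G HG. destruct (ep_div q G Hq0 HG) as [Hq' [Hem Hm]].
      set (m := (q / ep q G)%nat) in *. set (e := ep q G) in *.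
      assert (HmM : (M0 <= m)%nat) by nia.
      specialize (HM0 m HmM). fold F.
      assert (HR : RS m (fun j => F (INR j / INR m)) / INR m <= I + eps').
      { apply Rabs_def2 in HM0. lra. }
      assert (Hmpos : 0 < INR m) by (apply lt_0_INR; lia).
      unfold F in HR.
      replace (2 * INR e * RS m (fun j => Cmod (phi (INR j / INR m)) ^ 2))
        with (2 * INR q * (RS m (fun j => Cmod (phi (INR j / INR m)) ^ 2) / INR m)).
      + apply Rmult_le_compat_l; [apply Rmult_le_pos; [lra|apply pos_INR]|exact HR].
      + rewrite Hq' at 1. rewrite mult_INR. field. lra.
    - apply Rmult_le_compat_r.
      + apply Rmult_le_pos; [apply Rmult_le_pos; [lra|apply pos_INR]|lra].
      + apply le_INR. exact Hnd. }
  assert (HC : INR (large_count phi (sqrt C0) q) * (C0 * INR q) <= S).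
  { unfold large_count, S. rewrite units_seq0 by auto. rewrite <- lsum_seq.
    eapply Rle_trans; [|apply lsum_filter_le; intros; apply pow2_ge_0].
    apply count_le; [intros; apply pow2_ge_0|].
    intros p Hp. destruct (Rlt_dec (sqrt C0) (Cmod (gauss phi p q) / sqrt (INR q))) as [Hlt|]; [|discriminate].
    assert (Hsq : 0 < sqrt (INR q)) by (apply sqrt_lt_R0; apply lt_0_INR; lia).
    assert (H1 : sqrt C0 * sqrt (INR q) < Cmod (gauss phi p q)).
    { apply (Rmult_lt_compat_r (sqrt (INR q))) in Hlt; auto.
      unfold Rdiv in Hlt. rewrite Rmult_assoc, Rinv_l in Hlt by lra. lra. }
    assert (H2 : 0 <= sqrt C0 * sqrt (INR q)) by (apply Rmult_le_pos; apply sqrt_pos).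
    replace (C0 * INR q) with ((sqrt C0 * sqrt (INR q)) ^ 2)
      by (rewrite Rpow_mult_distr, !pow2_sqrt; [ring|apply pos_INR|lra]).
    nra. }
  assert (Hphi : INR q <= 2 ^ N * INR (eulerphi q)).
  { eapply Rle_trans; [apply q_le_phiR; auto|]. apply Rmult_le_compat_r; [apply pos_INR|].
    apply Rle_pow; [lra|exact Hnd]. }
  assert (Hqpos : 0 < INR q) by (apply lt_0_INR; lia).
  assert (Hphipos : 0 < INR (eulerphi q)).
  { destruct (Rle_lt_dec (INR (eulerphi q)) 0) as [H|H]; [|exact H].
    exfalso. assert (2 ^ N * INR (eulerphi q) <= 0) by (apply Rmult_le_0_l; lra). lra. }
  set (cnt := INR (large_count phi (sqrt C0) q)) in *.
  set (ph := INR (eulerphi q)) in *.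
  assert (Hcnt : cnt * C0 <= INR N * 2 * INR q * (I + eps')).
  { apply (Rmult_le_reg_r (INR q)); auto. nra. }
  assert (Hcnt2 : cnt * C0 <= INR N * 2 * 2 ^ N * ph * (I + eps')).
  { eapply Rle_trans; [exact Hcnt|]. assert (0 <= I + eps') by lra.
    assert (INR N * 2 * INR q <= INR N * 2 * (2 ^ N * ph)) by (apply Rmult_le_compat_l; lra).
    nra. }
  apply (Rmult_le_reg_r (ph * C0)); [nra|].
  replace (cnt / ph * (ph * C0)) with (cnt * C0) by (field; lra).
  replace ((eps * I + delta) * (ph * C0)) with (INR N * 2 * 2 ^ N * ph * (I + eps')).
  - exact Hcnt2.
  - unfold C0, eps'. field. lra.
Qed.
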